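(* Let $a,b\in\mathbb{R}\setminus\{0\}$, $s\le t$, and let $$m=\int_s^t\int_s^\sigma e^{ia\sigma}e^{ib\sigma_1}d\sigma_1\,d\sigma-I_{a+b=0}\frac{t-s}{ib}.$$ If $\gamma\in[0,1/2]$ then $$|m|\lesssim\frac{|t-s|^{2\gamma}}{|b|^{\gamma}|a|^{1-\gamma}|a+b|^{1-2\gamma}}+\frac{|t-s|^{2\gamma}}{|a|^{1-\gamma}|b|^{1-\gamma}}.$$
   Context: $I_{a+b=0}$ is $1$ if $a+b=0$ and $0$ otherwise; the implicit constant is independent of $a,b,s,t$. When $a+b=0$ and $\gamma<1/2$ the first term on the right is interpreted as $+\infty$. *)

(* Defs.v *)
From Stdlib Require Import Reals.
From Coquelicot Require Import Coquelicot.
Open Scope R_scope.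

Definition cis (x : R) : C := (cos x, sin x).

(* x^y for x >= 0 with the convention 0^0 = 1 and 0^y = 0 for y > 0 *)
Definition rpow (x y : R) : R :=
  if Req_EM_T x 0 then (if Req_EM_T y 0 then 1 else 0) else Rpower x y.

Definition ind_sum0 (a b : R) : R := if Req_EM_T (a + b) 0 then 1 else 0.

Definition m_int (a b s t : R) : C :=
  Cminus
    (RInt (V := C_R_CompleteNormedModule)
       (fun sigma => RInt (V := C_R_CompleteNormedModule)
          (fun sigma1 => Cmult (cis (a * sigma)) (cis (b * sigma1))) s sigma) s t)
    (Cmult (RtoC (ind_sum0 a b)) (Cdiv (RtoC (t - s)) (0, b))).

(* Main.v *)
Require Import Defs.
From Stdlib Require Import Reals Lra Psatz FunctionalExtensionality.
From Coquelicot Require Import Coquelicot.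
Open Scope R_scope.

Lemma cis_mul x y : Cmult (cis x) (cis y) = cis (x+y).
Proof. unfold cis, Cmult; simpl. rewrite cos_plus, sin_plus. f_equal; ring. Qed.

Lemma Cmod_cis x : Cmod (cis x) = 1.
Proof. unfold Cmod, cis. cbn [fst snd].
  pose proof (sin2_cos2 x). unfold Rsqr in H.
  replace (cos x ^ 2 + sin x ^ 2) with 1 by nra. apply sqrt_1. Qed.

Lemma cos_lb1 d : 1 - d*d/2 <= cos d.
Proof.
  destruct (Rle_dec (Rabs d) 2) as [H|H].
  - apply Rcomplements.Rabs_le_between in H. destruct (pre_cos_bound d 0 ltac:(lra) ltac:(lra)) as [H1 _].
    replace (2*0+1)%nat with 1%nat in H1 by reflexivity.
    unfold cos_approx, cos_term in H1. simpl in H1. lra.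
  - pose proof (COS_bound d). assert (2 < Rabs d) by lra.
    assert (4 < d*d). { destruct (Rle_or_lt 0 d). rewrite Rabs_right in * by lra; nra. rewrite Rabs_left in * by lra; nra. }
    lra.
Qed.

Lemma cis_lip x y : Cmod (Cminus (cis x) (cis y)) <= Rabs (x - y).
Proof.
  unfold Cmod, cis, Cminus, Cplus, Copp; cbn [fst snd].
  rewrite <- sqrt_Rsqr_abs. apply sqrt_le_1_alt.
  pose proof (cos_lb1 (x-y)). rewrite cos_minus in H.
  pose proof (sin2_cos2 x). pose proof (sin2_cos2 y). unfold Rsqr in *. nra.
Qed.

Lemma cis_le2 x y : Cmod (Cminus (cis x) (cis y)) <= 2.
Proof.
  unfold Cminus. eapply Rle_trans. apply Cmod_triangle.
  rewrite Cmod_opp, !Cmod_cis. lra.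
Qed.

Lemma is_RInt_zcis (z : C) (c u v : R) : c <> 0 ->
  is_RInt (V:=C_R_NormedModule) (fun x => Cmult z (cis (c*x))) u v
    (Cdiv (Cmult z (Cminus (cis (c*v)) (cis (c*u)))) (0,c)).
Proof.
  intros Hc. destruct z as [z1 z2].
  replace (Cdiv (Cmult (z1,z2) (Cminus (cis (c*v)) (cis (c*u)))) (0,c)) with
    ((z1*sin(c*v) + z2*cos(c*v))/c - (z1*sin(c*u) + z2*cos(c*u))/c,
     (-z1*cos(c*v) + z2*sin(c*v))/c - (-z1*cos(c*u) + z2*sin(c*u))/c).
  2:{ unfold Cdiv, Cmult, Cinv, Cminus, Cplus, Copp, cis; cbn [fst snd].
      f_equal. all: try (field; auto). }
  apply is_RInt_fct_extend_pair.
  - eapply is_RInt_ext with (f := fun x => z1 * cos (c*x) - z2 * sin (c*x)).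
    { intros x _. unfold Cmult, cis; simpl. ring. }
    apply (is_RInt_derive (fun x => (z1*sin(c*x) + z2*cos(c*x))/c)).
    + intros x _. auto_derive; auto. field; auto.
    + intros x _. apply (ex_derive_continuous (K:=R_AbsRing) (V:=R_NormedModule)). auto_derive; auto.
  - eapply is_RInt_ext with (f := fun x => z1 * sin (c*x) + z2 * cos (c*x)).
    { intros x _. unfold Cmult, cis; simpl. ring. }
    apply (is_RInt_derive (fun x => (-z1*cos(c*x) + z2*sin(c*x))/c)).
    + intros x _. auto_derive; auto. field; auto.
    + intros x _. apply (ex_derive_continuous (K:=R_AbsRing) (V:=R_NormedModule)). auto_derive; auto.
Qed.
Lemma normC (x : C) : @norm R_AbsRing C_R_NormedModule x = Cmod x.
Proof. destruct x as [x y]. unfold norm; simpl. unfold prod_norm, Cmod; simpl.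
  change (norm x) with (Rabs x). change (norm y) with (Rabs y).
  rewrite !Rmult_1_r. pose proof (Rsqr_abs x); pose proof (Rsqr_abs y). unfold Rsqr in *. rewrite <- H, <- H0. reflexivity. Qed.

Lemma Cmod_0c c : Cmod (0,c) = Rabs c.
Proof. unfold Cmod; simpl. rewrite <- sqrt_Rsqr_abs. f_equal. unfold Rsqr; ring. Qed.

Lemma is_RInt_zcis0 (z : C) (c u v : R) : c = 0 ->
  is_RInt (V:=C_R_NormedModule) (fun x => Cmult z (cis (c*x))) u v
    ((v-u) * fst z, (v-u) * snd z).
Proof.
  intros ->. eapply is_RInt_ext. 2: apply (is_RInt_const (V:=C_R_NormedModule) u v z).
  intros x _. destruct z as [z1 z2]. unfold Cmult, cis. rewrite Rmult_0_l, cos_0, sin_0. simpl.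
  f_equal; ring.
Qed.

Lemma inner a b s sg : b <> 0 ->
  RInt (V := C_R_CompleteNormedModule)
          (fun sigma1 => Cmult (cis (a * sg)) (cis (b * sigma1))) s sg
  = Cdiv (Cmult (cis (a*sg)) (Cminus (cis (b*sg)) (cis (b*s)))) (0,b).
Proof. intros Hb. apply is_RInt_unique. apply (is_RInt_zcis (cis (a*sg)) b s sg Hb). Qed.

Lemma C0c_neq c : c <> 0 -> ((0,c) : C) <> RtoC 0.
Proof. intros Hc H. injection H. auto. Qed.

Lemma m_bounds a b s t (Ha: a<>0) (Hb: b<>0) (Hst: s<=t) :
 (a+b = 0 -> Cmod (m_int a b s t) <= (t-s)/Rabs b) /\
 (a+b <> 0 -> Cmod (m_int a b s t) <= (2/Rabs(a+b) + 2/Rabs a)/Rabs b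
     /\ Cmod (m_int a b s t) <= 2*(t-s)/Rabs b
     /\ Cmod (m_int a b s t) <= (t-s)*(t-s)).
Proof.
  set (Ig := fun sg => Cdiv (Cmult (cis (a*sg)) (Cminus (cis (b*sg)) (cis (b*s)))) (0,b)).
  assert (HmI: m_int a b s t = Cminus (RInt (V:=C_R_CompleteNormedModule) Ig s t)
     (Cmult (RtoC (ind_sum0 a b)) (Cdiv (RtoC (t-s)) (0,b)))).
  { unfold m_int. f_equal. f_equal. apply functional_extensionality; intro sg. apply inner; auto. }
  set (P := Cinv (0,b)). set (Q := Cdiv (Copp (cis (b*s))) (0,b)).
  assert (HI: forall sg, Ig sg = Cplus (Cmult P (cis ((a+b)*sg))) (Cmult Q (cis (a*sg)))).
  { intro sg. unfold Ig, P, Q, Cdiv, Cinv, Cmult, Cplus, Cminus, Copp, cis; simpl.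
    replace ((a+b)*sg) with (a*sg + b*sg) by ring. rewrite cos_plus, sin_plus. f_equal; field; intro; apply Hb; nra. }
  assert (Hb0 : 0 < Rabs b) by (apply Rabs_pos_lt; auto).
  assert (Ha0 : 0 < Rabs a) by (apply Rabs_pos_lt; auto).
  assert (HCP : Cmod P = / Rabs b).
  { unfold P. rewrite Cmod_inv by (apply C0c_neq; auto). rewrite Cmod_0c. reflexivity. }
  assert (HCQ : Cmod Q = / Rabs b).
  { unfold Q. rewrite Cmod_div by (apply C0c_neq; auto). rewrite Cmod_0c, Cmod_opp, Cmod_cis. field. lra. }
  assert (HIb : forall sg, s <= sg -> Cmod (Ig sg) <= sg - s).
  { intros sg Hsg. unfold Ig. rewrite Cmod_div by (apply C0c_neq; auto).
    rewrite Cmod_mult, Cmod_cis, Cmod_0c, Rmult_1_l.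
    pose proof (cis_lip (b*sg) (b*s)).
    replace (b*sg - b*s) with (b*(sg-s)) in H by ring. rewrite Rabs_mult, (Rabs_right (sg-s)) in H by lra.
    apply Rmult_le_reg_r with (Rabs b); auto. unfold Rdiv. rewrite Rmult_assoc, Rinv_l by lra. lra. }
  split.
  - intros Hab.
    assert (HV: is_RInt (V:=C_R_NormedModule) Ig s t
      (Cplus ((t-s) * fst P, (t-s) * snd P)
             (Cdiv (Cmult Q (Cminus (cis(a*t)) (cis(a*s)))) (0,a)))).
    { apply is_RInt_ext with (f := fun sg => Cplus (Cmult P (cis ((a+b)*sg))) (Cmult Q (cis (a*sg)))).
      { intros; rewrite HI; auto. }
      apply (is_RInt_plus (V:=C_R_NormedModule)).
      apply is_RInt_zcis0; auto. apply is_RInt_zcis; auto. }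
    assert (Hind : ind_sum0 a b = 1).
    { unfold ind_sum0. destruct (Req_EM_T (a+b) 0); [reflexivity|contradiction]. }
    rewrite HmI, Hind, (is_RInt_unique (V:=C_R_CompleteNormedModule) _ _ _ _ HV).
    set (V2 := Cdiv (Cmult Q (Cminus (cis(a*t)) (cis(a*s)))) (0,a)).
    replace (Cminus (Cplus ((t-s) * fst P, (t-s) * snd P) V2) (Cmult (RtoC 1) (Cdiv (RtoC (t - s)) (0, b)))) with V2.
    2:{ generalize V2. intros c. unfold P, Cdiv, Cinv, Cmult, Cplus, Cminus, Copp, RtoC.
        apply injective_projections; simpl; field; intro; apply Hb; nra. }
    unfold V2. rewrite Cmod_div by (apply C0c_neq; auto). rewrite Cmod_mult, HCQ, Cmod_0c.
    pose proof (cis_lip (a*t) (a*s)) as E2.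
    replace (a*t - a*s) with (a*(t-s)) in E2 by ring.
    rewrite Rabs_mult, (Rabs_right (t-s)) in E2 by lra.
    apply Rle_trans with (/ Rabs b * (Rabs a * (t-s)) / Rabs a).
    * unfold Rdiv. repeat apply Rmult_le_compat_r; try apply Rmult_le_compat_l;
          try (left; apply Rinv_0_lt_compat; auto); auto.
    * right. field. split; lra.
  - intros Hab.
    assert (HV: is_RInt (V:=C_R_NormedModule) Ig s t
      (Cplus (Cdiv (Cmult P (Cminus (cis((a+b)*t)) (cis((a+b)*s)))) (0,a+b))
             (Cdiv (Cmult Q (Cminus (cis(a*t)) (cis(a*s)))) (0,a)))).
    { apply is_RInt_ext with (f := fun sg => Cplus (Cmult P (cis ((a+b)*sg))) (Cmult Q (cis (a*sg)))).
      { intros; rewrite HI; auto. }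
      apply (is_RInt_plus (V:=C_R_NormedModule)); apply is_RInt_zcis; auto. }
    assert (Hind : ind_sum0 a b = 0).
    { unfold ind_sum0. destruct (Req_EM_T (a+b) 0); [contradiction|reflexivity]. }
    rewrite HmI, Hind, (is_RInt_unique (V:=C_R_CompleteNormedModule) _ _ _ _ HV).
    set (V1 := Cdiv (Cmult P (Cminus (cis((a+b)*t)) (cis((a+b)*s)))) (0,a+b)).
    set (V2 := Cdiv (Cmult Q (Cminus (cis(a*t)) (cis(a*s)))) (0,a)).
    replace (Cminus (Cplus V1 V2) (Cmult (RtoC 0) (Cdiv (RtoC (t - s)) (0, b)))) with (Cplus V1 V2).
    2:{ generalize (Cplus V1 V2) (Cdiv (RtoC (t - s)) (0, b)). intros c w.
        apply injective_projections; simpl; ring. }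
    assert (HS0 : 0 < Rabs (a+b)) by (apply Rabs_pos_lt; auto).
    assert (HV1 : Cmod V1 = / Rabs b * Cmod (Cminus (cis((a+b)*t)) (cis((a+b)*s))) / Rabs (a+b)).
    { unfold V1. rewrite Cmod_div by (apply C0c_neq; auto). rewrite Cmod_mult, HCP, Cmod_0c. reflexivity. }
    assert (HV2 : Cmod V2 = / Rabs b * Cmod (Cminus (cis(a*t)) (cis(a*s))) / Rabs a).
    { unfold V2. rewrite Cmod_div by (apply C0c_neq; auto). rewrite Cmod_mult, HCQ, Cmod_0c. reflexivity. }
    pose proof (cis_le2 ((a+b)*t) ((a+b)*s)) as D1.
    pose proof (cis_le2 (a*t) (a*s)) as D2.
    pose proof (cis_lip ((a+b)*t) ((a+b)*s)) as E1.
    pose proof (cis_lip (a*t) (a*s)) as E2.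
    replace ((a+b)*t - (a+b)*s) with ((a+b)*(t-s)) in E1 by ring.
    replace (a*t - a*s) with (a*(t-s)) in E2 by ring.
    rewrite Rabs_mult, (Rabs_right (t-s)) in E1, E2 by lra.
    pose proof (Cmod_triangle V1 V2) as T.
    split; [|split].
    + eapply Rle_trans; [exact T|]. rewrite HV1, HV2. unfold Rdiv.
      apply Rle_trans with (/ Rabs b * 2 * / Rabs (a+b) + / Rabs b * 2 * / Rabs a).
      * apply Rplus_le_compat; repeat apply Rmult_le_compat_r; try apply Rmult_le_compat_l;
          try (left; apply Rinv_0_lt_compat; auto); auto.
      * right. field. split; lra.
    + eapply Rle_trans; [exact T|]. rewrite HV1, HV2.
      apply Rle_trans with (/ Rabs b * (Rabs (a+b) * (t-s)) / Rabs (a+b) + / Rabs b * (Rabs a * (t-s)) / Rabs a).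
      * unfold Rdiv. apply Rplus_le_compat; repeat apply Rmult_le_compat_r; try apply Rmult_le_compat_l;
          try (left; apply Rinv_0_lt_compat; auto); auto.
      * right. field. split; lra.
    + pose proof (norm_RInt_le_const (V:=C_R_NormedModule) Ig s t (Cplus V1 V2) (t-s) Hst) as N.
      rewrite normC in N. apply N; auto.
      intros x Hx. rewrite normC. eapply Rle_trans. apply HIb; lra. lra.
Qed.

Lemma rpow_pos x y : 0 < x -> rpow x y = Rpower x y.
Proof. intros H. unfold rpow. destruct (Req_EM_T x 0); [lra|reflexivity]. Qed.

Lemma rpow_nonneg x y : 0 <= rpow x y.
Proof. unfold rpow, Rpower. destruct (Req_EM_T x 0); [destruct (Req_EM_T y 0); lra|].
  left; apply exp_pos. Qed.

Lemma div_nonneg x y : 0 <= x -> 0 <= y -> 0 <= x / y.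
Proof. intros Hx Hy. destruct (Req_dec y 0) as [->|H].
  - unfold Rdiv. rewrite Rinv_0, Rmult_0_r. lra.
  - apply Rdiv_le_0_compat; lra. Qed.

Lemma exp_div3 x y z w : exp x / (exp y * exp z * exp w) = exp (x - y - z - w).
Proof. unfold Rminus. rewrite !exp_plus, !exp_Ropp.
  pose proof (exp_pos y). pose proof (exp_pos z). pose proof (exp_pos w). field. lra. Qed.

Lemma exp_div2 x y z : exp x / (exp y * exp z) = exp (x - y - z).
Proof. unfold Rminus. rewrite !exp_plus, !exp_Ropp.
  pose proof (exp_pos y). pose proof (exp_pos z). field. lra. Qed.

Lemma exp_mono x y : x <= y -> exp x <= exp y.
Proof. intros [H|H]. left; apply exp_increasing; auto. right; subst; auto. Qed.

(* Interpolation on the log scale *)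
Lemma interp (X A B S L g : R) : 0 < X -> 0 < A -> 0 < B -> 0 < S -> 0 < L ->
  0 <= g -> g <= 1/2 ->
  (X*A*S <= 8 \/ X*A*B <= 8) -> X*X*A*B <= 9*L*L ->
  X <= 72 * (exp (2*g*ln L - g*ln B - (1-g)*ln A - (1-2*g)*ln S)
           + exp (2*g*ln L - (1-g)*ln A - (1-g)*ln B)).
Proof.
  intros HX HA HB HS HL g0 g1 H0 H1.
  assert (l8 : 0 <= ln 8) by (rewrite <- ln_1; apply ln_le; lra).
  assert (l9 : 0 <= ln 9) by (rewrite <- ln_1; apply ln_le; lra).
  assert (l72 : ln 72 = ln 8 + ln 9) by (rewrite <- ln_mult by lra; f_equal; lra).
  assert (M1 : 2 * ln X + ln A + ln B <= ln 9 + 2 * ln L).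
  { replace (2 * ln X + ln A + ln B) with (ln (X*X*A*B)).
    2:{ rewrite !ln_mult; try lra; repeat apply Rmult_lt_0_compat; lra. }
    replace (ln 9 + 2 * ln L) with (ln (9*L*L)).
    2:{ rewrite !ln_mult; try lra; repeat apply Rmult_lt_0_compat; lra. }
    apply ln_le; auto. repeat apply Rmult_lt_0_compat; lra. }
  pose proof (exp_pos (2*g*ln L - g*ln B - (1-g)*ln A - (1-2*g)*ln S)).
  pose proof (exp_pos (2*g*ln L - (1-g)*ln A - (1-g)*ln B)).
  assert (P1 := Rmult_le_compat_l g _ _ g0 M1).
  assert (q8 : 0 <= g * ln 8) by (apply Rmult_le_pos; lra).
  assert (q9 : 0 <= (1-g) * ln 9) by (apply Rmult_le_pos; lra).
  rewrite <- (exp_ln X) at 1 by lra. rewrite <- (exp_ln 72) by lra.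
  destruct H0 as [H0|H0].
  - assert (M0 : ln X + ln A + ln S <= ln 8).
    { replace (ln X + ln A + ln S) with (ln (X*A*S)).
      2:{ rewrite !ln_mult; try lra; repeat apply Rmult_lt_0_compat; lra. }
      apply ln_le; auto. repeat apply Rmult_lt_0_compat; lra. }
    assert (P2 := Rmult_le_compat_l (1-2*g) _ _ ltac:(lra) M0).
    apply Rle_trans with (exp (ln 72) * exp (2*g*ln L - g*ln B - (1-g)*ln A - (1-2*g)*ln S)).
    2:{ apply Rmult_le_compat_l. left; apply exp_pos. lra. }
    rewrite <- exp_plus. apply exp_mono. lra.
  - assert (M0 : ln X + ln A + ln B <= ln 8).
    { replace (ln X + ln A + ln B) with (ln (X*A*B)).
      2:{ rewrite !ln_mult; try lra; repeat apply Rmult_lt_0_compat; lra. }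
      apply ln_le; auto. repeat apply Rmult_lt_0_compat; lra. }
    assert (P2 := Rmult_le_compat_l (1-2*g) _ _ ltac:(lra) M0).
    apply Rle_trans with (exp (ln 72) * exp (2*g*ln L - (1-g)*ln A - (1-g)*ln B)).
    2:{ apply Rmult_le_compat_l. left; apply exp_pos. lra. }
    rewrite <- exp_plus. apply exp_mono. lra.
Qed.

Lemma prod_bounds X A B S L : 0 <= X -> 0 < A -> 0 < B -> 0 < S -> 0 < L ->
  A <= B + S -> A - B <= S ->
  X <= (2/S + 2/A)/B -> X <= 2*L/B -> X <= L*L ->
  (X*A*S <= 8 \/ X*A*B <= 8) /\ X*X*A*B <= 9*L*L.
Proof.
  intros HX HA HB HS HL T1 T2 H1 H2 H3.
  assert (H1' : X*B*A*S <= 2*A + 2*S).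
  { apply Rmult_le_compat_r with (r := B*A*S) in H1; [|repeat apply Rmult_le_pos; lra].
    replace ((2/S + 2/A)/B * (B*A*S)) with (2*A+2*S) in H1 by (field; lra). lra. }
  assert (H2' : X*B <= 2*L).
  { apply Rmult_le_compat_r with (r := B) in H2; [|lra].
    replace (2*L/B*B) with (2*L) in H2 by (field; lra). lra. }
  split.
  - destruct (Rle_dec (X*A*S) 8) as [h|h]; [left; auto|right].
    assert (8*B < X*A*S*B) by nra.
    assert (X*A*B*S <= 8*S) by nra.
    apply Rmult_le_reg_r with S; auto.
  - destruct (Rle_dec A (2*B)) as [h|h].
    + assert (X*B*(X*B) <= 2*L*(2*L)) by (apply Rmult_le_compat; nra).
      nra.
    + assert (X*A*B <= 6).
      { apply Rmult_le_reg_r with S; auto. nra. }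
      assert (X*(X*A*B) <= L*L*6) by (apply Rmult_le_compat; [lra| repeat apply Rmult_le_pos; lra | lra | lra]).
      nra.
Qed.

Theorem lemma8 (gamma : R) (hg0 : 0 <= gamma) (hg1 : gamma <= 1/2) :
  exists K : R, 0 < K /\
    forall a b s t : R, a <> 0 -> b <> 0 -> s <= t ->
      (a + b <> 0 \/ gamma = 1/2) ->
      Cmod (m_int a b s t) <=
        K * ( rpow (Rabs (t - s)) (2 * gamma) /
                (rpow (Rabs b) gamma * rpow (Rabs a) (1 - gamma)
                 * rpow (Rabs (a + b)) (1 - 2 * gamma))
            + rpow (Rabs (t - s)) (2 * gamma) /
                (rpow (Rabs a) (1 - gamma) * rpow (Rabs b) (1 - gamma))).
Proof.
  exists 72. split; [lra|].
  intros a b s t Ha Hb Hst Hor.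
  destruct (m_bounds a b s t Ha Hb Hst) as [Hz Hnz].
  assert (Hb0 : 0 < Rabs b) by (apply Rabs_pos_lt; auto).
  assert (Ha0 : 0 < Rabs a) by (apply Rabs_pos_lt; auto).
  assert (HT1 : 0 <= rpow (Rabs (t - s)) (2 * gamma) /
                (rpow (Rabs b) gamma * rpow (Rabs a) (1 - gamma)
                 * rpow (Rabs (a + b)) (1 - 2 * gamma))).
  { apply div_nonneg. apply rpow_nonneg. repeat apply Rmult_le_pos; apply rpow_nonneg. }
  assert (HT2 : 0 <= rpow (Rabs (t - s)) (2 * gamma) /
                (rpow (Rabs a) (1 - gamma) * rpow (Rabs b) (1 - gamma))).
  { apply div_nonneg. apply rpow_nonneg. repeat apply Rmult_le_pos; apply rpow_nonneg. }
  pose proof (Cmod_ge_0 (m_int a b s t)) as HX0.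
  destruct (Req_dec s t) as [Heq|Hne].
  - subst t. destruct (Req_dec (a+b) 0) as [Hab|Hab].
    + specialize (Hz Hab). replace ((s-s)/Rabs b) with 0 in Hz by (field; lra). lra.
    + destruct (Hnz Hab) as [_ [H2 _]]. replace (2*(s-s)/Rabs b) with 0 in H2 by (field; lra). lra.
  - assert (HL : 0 < t - s) by lra.
    rewrite (Rabs_right (t-s)) in * by lra.
    destruct (Req_dec (a+b) 0) as [Hab|Hab].
    + destruct Hor as [Hor|Hg]; [contradiction|]. subst gamma.
      specialize (Hz Hab).
      assert (HA : Rabs a = Rabs b). { replace a with (-b) by lra. apply Rabs_Ropp. }
      rewrite HA in *.
      assert (Hu : rpow (Rabs b) (1/2) * rpow (Rabs b) (1/2) = Rabs b).
      { rewrite rpow_pos by lra. rewrite <- Rpower_plus. replace (1/2+1/2) with 1 by lra.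
        apply Rpower_1; lra. }
      assert (HLr : rpow (t-s) (2*(1/2)) = t-s).
      { rewrite rpow_pos by lra. replace (2*(1/2)) with 1 by lra. apply Rpower_1; lra. }
      replace (1 - 1/2) with (1/2) in * by lra.
      rewrite HLr, Hu in *.
      replace ((t-s)/Rabs b) with ((t-s)/Rabs b) in Hz by reflexivity.
      lra.
    + destruct (Hnz Hab) as [H1 [H2 H3]].
      assert (HS0 : 0 < Rabs (a+b)) by (apply Rabs_pos_lt; auto).
      destruct HX0 as [HX0|HX0]; [|rewrite <- HX0; lra].
      rewrite (rpow_pos (t-s) (2*gamma)), (rpow_pos (Rabs b) gamma), (rpow_pos (Rabs a) (1-gamma)),
        (rpow_pos (Rabs (a+b)) (1-2*gamma)), (rpow_pos (Rabs b) (1-gamma)) by lra.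
      unfold Rpower. rewrite exp_div3, exp_div2.
      assert (T1 : Rabs a <= Rabs b + Rabs (a+b)).
      { replace a with ((-b) + (a+b)) at 1 by ring. eapply Rle_trans. apply Rabs_triang.
        rewrite Rabs_Ropp. lra. }
      assert (T2 : Rabs a - Rabs b <= Rabs (a+b)).
      { replace a with ((a+b) + (-b)) at 1 by ring. pose proof (Rabs_triang (a+b) (-b)).
        rewrite Rabs_Ropp in H. lra. }
      destruct (prod_bounds (Cmod (m_int a b s t)) (Rabs a) (Rabs b) (Rabs (a+b)) (t-s))
        as [M0 M1]; try lra.
      apply interp; auto; lra.
Qed.
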